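(* Let $\Sigma$ be a two-letter alphabet and let $w\in\Sigma^*$ be a binary word. If every element of $\mathtt{BR}(w)$ is rich, then $2\le l(w)\le 8$.
   Context: For a word $w=w_1\cdots w_n$, $|w|=n$, $w^R=w_n\cdots w_1$; $w$ is a palindrome if $w=w^R$; a factor of $w$ is a word $u$ with $w=puq$. A word $w$ is rich if the number of distinct nonempty palindromic factors of $w$ equals $|w|$. The block reversal of a nonempty word $w$ is $\mathtt{BR}(w)=\{B_tB_{t-1}\cdots B_1 : w=B_1\cdots B_t,\ t\ge1,\ \text{each } B_i \text{ nonempty}\}$. Every nonempty word has a unique run-length encoding $w=c_1^{n_1}c_2^{n_2}\cdots c_k^{n_k}$ with letters $c_i\neq c_{i+1}$ and $n_i\ge1$; $(n_1,\dots,n_k)$ is the run sequence and $l(w)=k$ is its length. A binary word is a word in which exactly two distinct letters occur. *)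

(* Defs.v *)
From mathcomp Require Import all_boot.
Set Implicit Arguments. Unset Strict Implicit. Unset Printing Implicit Defensive.

Section Words.
Variable T : eqType.

Definition palindrome (w : seq T) : bool := w == rev w.

Definition nonempty_factors (w : seq T) : seq (seq T) :=
  [seq take j (drop i w) | i <- iota 0 (size w), j <- iota 1 (size w - i)].

Definition num_pal_factors (w : seq T) : nat :=
  size (undup [seq u <- nonempty_factors w | palindrome u]).

Definition rich (w : seq T) : bool := num_pal_factors w == size w.

Definition in_BR (w u : seq T) : Prop :=
  exists bs : seq (seq T),
    [/\ bs != [::], all (fun b => b != [::]) bs, flatten bs = w
      & u = flatten (rev bs)].

Fixpoint rle (w : seq T) : seq (T * nat) :=
  match w with
  | [::] => [::]
  | a :: w' =>
      match rle w' with
      | (b, n) :: r => if a == b then (b, n.+1) :: r else (a, 1) :: (b, n) :: r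
      | [::] => [:: (a, 1)]
      end
  end.

Definition run_len (w : seq T) : nat := size (rle w).

Definition binary_word (w : seq T) : bool := size (undup w) == 2.

End Words.

Example rle_ex : rle [:: 0; 0; 1; 0]%N = [:: (0,2); (1,1); (0,1)]%N. Proof. by []. Qed.
Example rich_ex : rich [:: 0; 1; 0; 0]%N. Proof. by []. Qed.
Example notrich_ex : ~~ rich [:: 0; 0; 1; 1; 0; 1; 0; 0]%N. Proof. by []. Qed.

(* Main.v *)
Require Import Defs.
From mathcomp Require Import all_boot zify.
Set Implicit Arguments. Unset Strict Implicit. Unset Printing Implicit Defensive.


Definition pf (T : eqType) (w : seq T) := [seq u <- nonempty_factors w | palindrome u].

Lemma mem_nef (T : eqType) (w v : seq T) :
  (v \in nonempty_factors w) = (v != [::]) && infix v w.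
Proof.
apply/allpairsPdep/andP.
  move=> [i [j [Hi Hj ->]]]; rewrite mem_iota in Hi; rewrite mem_iota in Hj.
  split.
    rewrite -size_eq0 size_take size_drop.
    case: ifP => _; first by rewrite -lt0n; case/andP: Hj.
    by rewrite -lt0n subn_gt0; rewrite add0n in Hi.
  exact: (infix_trans (infix_take _ _) (suffixW (suffix_drop _ _))).
move=> [Hne /infixP [s [s' Hw]]].
exists (size s), (size v); split.
- by rewrite mem_iota add0n Hw !size_cat; move: Hne; rewrite -size_eq0; lia.
- by rewrite mem_iota Hw !size_cat; move: Hne; rewrite -size_eq0; lia.
- by rewrite Hw drop_size_cat // take_size_cat.
Qed.

Lemma mem_pf (T : eqType) (w v : seq T) :
  (v \in pf w) = [&& v != [::], infix v w & palindrome v].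
Proof. by rewrite mem_filter mem_nef andbC andbA. Qed.

Lemma undup_sub (T : eqType) (s t : seq T) :
  {subset s <= t} -> size (undup s) <= size (undup t).
Proof.
move=> H; apply: uniq_leq_size; first exact: undup_uniq.
by move=> x; rewrite !mem_undup; apply: H.
Qed.

Lemma undup_cat_le (T : eqType) (s t : seq T) :
  size (undup (s ++ t)) <= size (undup s) + size (undup t).
Proof.
by rewrite undup_cat size_cat leq_add2r size_filter; apply: count_size.
Qed.

Lemma pal_suffix_uniq (T : eqType) (x : seq T) (c : T) v1 v2 :
  v1 != [::] -> v2 != [::] -> palindrome v1 -> palindrome v2 ->
  suffix v1 (rcons x c) -> suffix v2 (rcons x c) ->
  ~~ infix v1 x -> ~~ infix v2 x -> v1 = v2.
Proof.
wlog: v1 v2 / size v1 <= size v2.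
  move=> W n1 n2 p1 p2 s1 s2 i1 i2.
  case: (leqP (size v1) (size v2)) => h; first exact: W.
  by symmetry; apply: W => //; apply: ltnW.
move=> hle n1 n2 p1 p2 s1 s2 i1 i2.
have E1 := s1; have E2 := s2.
rewrite suffixE in E1; rewrite suffixE in E2.
move/eqP: E1 => E1; move/eqP: E2 => E2.
set z := rcons x c in E1 E2.
have Hv2z : size v2 <= size z by rewrite -E2 size_drop leq_subr.
have D : v1 = drop (size v2 - size v1) v2.
  by rewrite -{2}E2 drop_drop -{1}E1; congr drop; lia.
case: (ltngtP (size v1) (size v2)) => h; last first.
- by rewrite D h subnn drop0.
- by move: h; rewrite ltnNge hle.
exfalso; move/negP: i1; apply.
have P1 : v1 = take (size v1) v2.
  move/eqP: (p1) => P1'; move/eqP: (p2) => P2'.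
  have : rev v1 = take (size v2 - (size v2 - size v1)) (rev v2) by rewrite {1}D rev_drop.
  rewrite -P1' -P2' => E; rewrite {1}E; congr take; lia.
case/lastP: v2 n2 p2 s2 i2 E2 hle Hv2z D h P1 => [|v2' d] n2 p2 s2 i2 E2 hle Hv2z D h P1.
  by move: h.
rewrite suffix_rcons in s2; case/andP: s2 => _ s2.
rewrite size_rcons in h.
have P1' : v1 = take (size v1) v2'.
  rewrite {1}P1 -cats1 take_cat; case: ltnP => // H.
  have -> : size v1 - size v2' = 0 by lia.
  by rewrite take0 cats0 take_oversize.
apply: (@infix_trans _ v2'); last exact: suffixW s2.
by rewrite P1'; exact: infix_take.
Qed.

Lemma undup_const (T : eqType) (s : seq T) :
  {in s &, forall a b, a = b} -> size (undup s) <= 1.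
Proof.
case: s => [|a s] // H.
have -> : 1 = size (undup [:: a]) by [].
apply: undup_sub => y ys; rewrite inE; apply/eqP; apply: H => //.
by rewrite inE eqxx.
Qed.

Lemma npf_rcons (T : eqType) (x : seq T) c :
  num_pal_factors (rcons x c) <= num_pal_factors x + 1.
Proof.
rewrite /num_pal_factors -/(pf _) -/(pf _).
set S := [seq v <- pf (rcons x c) | v \notin pf x].
have H1 : size (undup S) <= 1.
  apply: undup_const => a b; rewrite [a \in S]mem_filter [b \in S]mem_filter.
  move=> /andP [na ia] /andP [nb ib].
  move: ia ib; rewrite !mem_pf => /and3P [a0 ia pa] /and3P [b0 ib pb].
  have na' : ~~ infix a x by move: na; rewrite mem_pf a0 pa andbT.
  have nb' : ~~ infix b x by move: nb; rewrite mem_pf b0 pb andbT.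
  move: ia ib; rewrite !infix_rconsl (negbTE na') (negbTE nb') !orbF => sa sb.
  exact: (pal_suffix_uniq a0 b0 pa pb sa sb na' nb').
apply: (leq_trans (undup_sub (t := S ++ pf x) _)).
  by move=> v vin; rewrite mem_cat mem_filter vin andbT; case: (v \in pf x); rewrite ?orbT.
by rewrite addnC; apply: (leq_trans (undup_cat_le _ _)); rewrite leq_add2r.
Qed.

Lemma npf_rcons_old (T : eqType) (x : seq T) c :
  (forall v, v != [::] -> palindrome v -> suffix v (rcons x c) -> infix v x) ->
  num_pal_factors (rcons x c) <= num_pal_factors x.
Proof.
move=> H; rewrite /num_pal_factors -/(pf _) -/(pf _).
apply: undup_sub => v; rewrite !mem_pf => /and3P [v0 iv pv].
rewrite v0 pv andbT /=.
move: iv; rewrite infix_rconsl => /orP [sv|//].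
exact: H.
Qed.

Lemma npf_cat (T : eqType) (x y : seq T) :
  num_pal_factors (x ++ y) <= num_pal_factors x + size y.
Proof.
elim/last_ind: y => [|y c IH]; first by rewrite cats0 addn0.
rewrite -rcons_cat size_rcons addnS -addn1.
by apply: (leq_trans (npf_rcons _ _)); rewrite leq_add2r.
Qed.

Lemma npf_size (T : eqType) (x : seq T) : num_pal_factors x <= size x.
Proof. by have := npf_cat [::] x; rewrite cat0s. Qed.

Lemma npf_rev (T : eqType) (x : seq T) : num_pal_factors (rev x) = num_pal_factors x.
Proof.
rewrite /num_pal_factors -/(pf _) -/(pf _).
have -> : size (undup (pf x)) = size (undup (map rev (pf x))).
  by rewrite undup_map_inj ?size_map //; apply: (can_inj revK).
apply: perm_size; apply: uniq_perm; rewrite ?undup_uniq // => v.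
rewrite !mem_undup.
have -> : v = rev (rev v) by rewrite revK.
rewrite (mem_map (can_inj revK)) !mem_pf revK -infix_revLR.
congr [&& _, _ & _].
  by rewrite -!size_eq0 size_rev.
by rewrite /palindrome revK; apply/eqP/eqP => [{1}->|{2}<-]; rewrite ?revK.
Qed.

Lemma npf_factor (T : eqType) (x f y : seq T) :
  num_pal_factors (x ++ f ++ y) <= size x + num_pal_factors f + size y.
Proof.
rewrite catA; apply: (leq_trans (npf_cat _ _)); rewrite leq_add2r.
rewrite -npf_rev rev_cat; apply: (leq_trans (npf_cat _ _)).
by rewrite npf_rev size_rev addnC.
Qed.

Lemma pal_ends (T : eqType) (s1 m s2 : seq T) :
  palindrome (s1 ++ m ++ s2) -> size s1 = size s2 -> s1 = rev s2.
Proof.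
move=> /eqP E Hs.
have := congr1 (take (size s1)) E.
by rewrite take_size_cat // !rev_cat -catA take_size_cat // size_rev.
Qed.

Lemma suffix_consE (T : eqType) (v s : seq T) y :
  suffix v (y :: s) -> v = y :: s \/ suffix v s.
Proof.
move/suffixP => [[|z t] /= E]; first by left.
by right; case: E => _ ->; apply: suffix_suffix.
Qed.

Lemma tail_suffix (T : eqType) (a b : T) (ab : a != b) q v :
  suffix v (nseq q b ++ [:: a; a]) -> v != [::] -> palindrome v ->
  v = [:: a] \/ v = [:: a; a].
Proof.
elim: q v => [|q IH] v /=.
  move=> /suffix_consE [->|]; first by right.
  move=> /suffix_consE [->|]; first by left.
  by rewrite suffixs0 => /eqP ->.
move=> /suffix_consE [->|]; last exact: IH.
move=> _ P.
have := pal_ends (s1 := [:: b]) (m := nseq q b ++ [:: a]) (s2 := [:: a]).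
rewrite -catA /= => /(_ P erefl) [] /eqP; by rewrite eq_sym (negbTE ab).
Qed.

Lemma nseq_shift (T : Type) (b : T) p s : nseq p b ++ b :: s = b :: (nseq p b ++ s).
Proof. by elim: p => //= p ->. Qed.

Lemma F_nonrich (T : eqType) (a b : T) (ab : a != b) p :
  num_pal_factors ([:: a; a; b; a] ++ nseq p.+2 b ++ [:: a; a]) <
  size ([:: a; a; b; a] ++ nseq p.+2 b ++ [:: a; a]).
Proof.
set x := [:: a; a; b; a] ++ nseq p.+2 b ++ [:: a].
have -> : [:: a; a; b; a] ++ nseq p.+2 b ++ [:: a; a] = rcons x a.
  by rewrite /x -cats1 -!catA.
rewrite size_rcons ltnS.
apply: (leq_trans (npf_rcons_old _)); last exact: npf_size.
move=> v v0 pv; rewrite /x -cats1 -!catA /=.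
have ba : b != a by rewrite eq_sym.
move=> /suffix_consE [E|].
  have E' : v = [:: a; a; b; a] ++ nseq p b ++ [:: b; b; a; a] by rewrite E /= !nseq_shift.
  rewrite E' in pv; have := pal_ends pv erefl.
  by move=> H; move: (congr1 (fun s => nth a s 3) H) => /= /eqP; rewrite (negbTE ab).
move=> /suffix_consE [E|].
  have E' : v = [:: a; b] ++ (a :: b :: b :: nseq p b) ++ [:: a; a] by rewrite E.
  rewrite E' in pv; have := pal_ends pv erefl.
  by move=> H; move: (congr1 (fun s => nth a s 1) H) => /= /eqP; rewrite (negbTE ba).
move=> /suffix_consE [E|].
  have E' : v = [:: b] ++ (a :: b :: b :: nseq p b ++ [:: a]) ++ [:: a] by rewrite E /= -catA.
  rewrite E' in pv; have := pal_ends pv erefl.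
  by move=> H; move: (congr1 (fun s => nth a s 0) H) => /= /eqP; rewrite (negbTE ba).
move=> /suffix_consE [E|].
  have E' : v = [:: a; b] ++ (b :: nseq p b) ++ [:: a; a] by rewrite E.
  rewrite E' in pv; have := pal_ends pv erefl.
  by move=> H; move: (congr1 (fun s => nth a s 1) H) => /= /eqP; rewrite (negbTE ba).
move=> sv; have := tail_suffix ab (q := p.+2) sv v0 pv.
by case => -> /=; rewrite eqxx.
Qed.

Definition unrle (T : eqType) (r : seq (T * nat)) := flatten [seq nseq p.2 p.1 | p <- r].

Lemma rle_props (T : eqType) (w : seq T) :
  [/\ unrle (rle w) = w, all (fun p => 0 < p.2) (rle w)
    & sorted (fun p q : T * nat => p.1 != q.1) (rle w)].
Proof.
elim: w => [|x w [IH1 IH2 IH3]] //=.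
move: IH1 IH2 IH3; case: (rle w) => [|[b n] r] /=.
  by rewrite /unrle /= => <-.
rewrite /unrle /= => IH1 /andP [n0 IH2] IH3.
case: eqP => [->|/eqP ne] /=.
  split; [by rewrite IH1 | by rewrite IH2 | by case: r IH3 {IH1 IH2}].
by split; [rewrite IH1 | rewrite n0 IH2 | rewrite ne IH3].
Qed.

Lemma two_elems (S : finType) (hS : #|S| = 2) (x y z : S) :
  x != y -> y != z -> z = x.
Proof.
move=> xy yz; apply/eqP/negPn/negP => zx.
have U : uniq [:: x; y; z] by rewrite /= !inE negb_or xy eq_sym zx yz.
have := max_card (mem [:: x; y; z]).
by move/card_uniqP: U => ->; rewrite hS.
Qed.

Unset Implicit Arguments.

Theorem mainTheorem2 (Sigma : finType) (hS : #|Sigma| = 2) (w : seq Sigma) :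
  binary_word w ->
  (forall u, in_BR w u -> rich u) ->
  2 <= run_len w <= 8.
Proof.
move=> bw Hr; have [E1 E2 E3] := rle_props w.
apply/andP; split.
  rewrite /run_len; case E: (rle w) => [|[c n] [|q r]] //; exfalso.
    by move: bw; rewrite /binary_word -E1 E.
  move: bw; rewrite /binary_word -E1 E /unrle /= cats0.
  have : size (undup (nseq n c)) <= size (undup [:: c]).
    by apply: undup_sub => y; rewrite mem_nseq => /andP [_ /eqP ->]; rewrite inE.
  by move=> /= H /eqP H2; move: H; rewrite H2.
rewrite leqNgt; apply/negP => H9; rewrite /run_len in H9.
case E: (rle w) H9 => [|[c0 n0] [|[c1 n1] [|[c2 n2] [|[c3 n3] [|[c4 n4] [|[c5 n5] [|[c6 n6] [|[c7 n7] [|[c8 n8] R]]]]]]]]] //= _.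
rewrite E in E2 E3; rewrite E in E1; clear E.
move: E3 => /= /and5P [d01 d12 d23 d34 /and5P [d45 d56 d67 d78 _]].
case: n0 E1 E2 => [|k0] //= E1 E2.
case: n1 E1 E2 => [|k1] //= E1 E2.
case: n2 E1 E2 => [|k2] //= E1 E2.
case: n3 E1 E2 => [|k3] //= E1 E2.
case: n4 E1 E2 => [|k4] //= E1 E2.
case: n5 E1 E2 => [|k5] //= E1 E2.
case: n6 E1 E2 => [|k6] //= E1 E2.
case: n7 E1 E2 => [|k7] //= E1 E2.
case: n8 E1 E2 => [|k8] //= E1 E2.
have e2 := two_elems hS d01 d12; subst c2.
have e3 := two_elems hS d12 d23; subst c3.
have e4 := two_elems hS d23 d34; subst c4.
have e5 := two_elems hS d34 d45; subst c5.
have e6 := two_elems hS d45 d56; subst c6.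
have e7 := two_elems hS d56 d67; subst c7.
have e8 := two_elems hS d67 d78; subst c8.
rewrite /unrle /= in E1.
set RR := flatten _ in E1.
set a := c0 in d01 E1 *; set b := c1 in d01 E1 *.
pose C1 := nseq k0.+1 a ++ nseq k1.+1 b.
pose C2 := nseq k2.+1 a.
pose C3 := nseq k3.+1 b ++ nseq k4 a.
pose C4 := a :: nseq k5.+1 b.
pose C5 := nseq k6.+1 a ++ [:: b].
pose C6 := nseq k7 b ++ nseq k8.+1 a.
have Ew : w = C1 ++ C2 ++ C3 ++ C4 ++ C5 ++ C6 ++ RR.
  rewrite -E1 /C1 /C2 /C3 /C4 /C5 /C6 -!catA /=.
  by rewrite nseq_shift.
set u := RR ++ C6 ++ C5 ++ C4 ++ C3 ++ C2 ++ C1.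
have nz : forall (s t : seq Sigma) x, s ++ x :: t != [::] by move=> [].
have HBR : in_BR w u.
  case HR: RR => [|r0 rr].
    exists [:: C1; C2; C3; C4; C5; C6]; split => //.
        by rewrite /= /C6 nz.
      by rewrite Ew HR /= cats0 !catA.
    by rewrite /u HR /= cats0 !catA.
  exists [:: C1; C2; C3; C4; C5; C6; RR]; split => //.
      by rewrite /= /C6 nz HR.
    by rewrite Ew /= cats0 !catA.
  by rewrite /u /= cats0 !catA.
have := Hr _ HBR; rewrite /rich.
have Eu : u = (RR ++ nseq k7 b ++ nseq (k8 + k6) a) ++
    ([:: a; a; b; a] ++ nseq (k5 + k3).+2 b ++ [:: a; a]) ++
    (nseq (k4 + k2 + k0) a ++ nseq k1.+1 b).
  rewrite /u /C1 /C2 /C3 /C4 /C5 /C6 -!catA /=.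
  by rewrite !nseqD -!catA /= !nseq_shift.
rewrite Eu => /eqP.
have H1 := npf_factor (RR ++ nseq k7 b ++ nseq (k8 + k6) a)
    ([:: a; a; b; a] ++ nseq (k5 + k3).+2 b ++ [:: a; a])
    (nseq (k4 + k2 + k0) a ++ nseq k1.+1 b).
have H2 := F_nonrich d01 (k5 + k3).
rewrite !size_cat !size_nseq /= in H1 H2 *.
move: H1 H2.
set N1 := num_pal_factors ((RR ++ _) ++ _).
set N2 := num_pal_factors ([:: a; a; b; a] ++ _).
move=> H1 H2 H3; rewrite H3 in H1. lia.
Qed.
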